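(* Let $q$ be a prime power and $n,k,\gamma$ positive integers with $n\ge2k+\gamma$. Then $$B_q(n,k,k+\gamma;3)\ge q^{\left\lfloor\frac{n-2k+1}{k+1}\right\rfloor\left\lfloor\frac{k}{\gamma}\right\rfloor}.$$
   Context: For a prime power $q$, $\mathcal{G}_q(n,k)$ denotes the set of all $k$-dimensional subspaces of $\mathbb{F}_q^n$. An $\alpha$-$(n,k,\delta)_q^c$ covering Grassmannian code is a subset $\mathcal{C}\subseteq\mathcal{G}_q(n,k)$ (no repeated codewords) such that every set of $\alpha$ distinct codewords of $\mathcal{C}$ spans a subspace of $\mathbb{F}_q^n$ of dimension at least $k+\delta$. $B_q(n,k,\delta;\alpha)$ denotes the maximum size of an $\alpha$-$(n,k,\delta)_q^c$ code. *)

(* Defs.v *)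
From HB Require Import structures.
From mathcomp Require Import all_boot all_order all_algebra all_field.
Set Implicit Arguments. Unset Strict Implicit. Unset Printing Implicit Defensive.
Import GRing.Theory.
Local Open Scope ring_scope.

(* A code is a duplicate-free list of
   subspaces.  [covering_code F n k delta alpha C] : C is an
   alpha-(n,k,delta)^c covering Grassmannian code: all codewords have dimension
   k and every alpha distinct codewords span a subspace of dimension >= k+delta. *)
Definition covering_code {F : fieldType} (n k delta alpha : nat)
  (C : seq {vspace 'rV[F]_n}) : Prop :=
  [/\ uniq C,
      (forall U, U \in C -> \dim U = k) &
      (forall S : seq {vspace 'rV[F]_n},
          uniq S -> size S = alpha -> {subset S <= C} ->
          (k + delta <= \dim (\sum_(U <- S) U)%VS)%N)].

(* Main.v *)
Require Import Defs.
From HB Require Import structures.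
From mathcomp Require Import all_boot all_order all_algebra all_field.
From mathcomp Require Import fingroup cyclic.
From mathcomp Require Import ring zify.
Set Implicit Arguments. Unset Strict Implicit. Unset Printing Implicit Defensive.
Import GRing.Theory.

Lemma arith_bound n k g : (0 < k)%N -> (0 < g)%N -> (g <= k)%N -> (2 * k + g <= n)%N ->
  (((n - 2 * k + 1) %/ (k + 1)) * (k %/ g) <= k * ((n - k) %/ (k + g)))%N.
Proof.
move=> k0 g0 gk hn.
set m := (n - 2 * k + 1) %/ (k + 1); set t := k %/ g; set j := (n - k) %/ (k + g).
have hm : (m * (k + 1) <= n - 2 * k + 1)%N by apply: leq_trunc_div.
have hj : (n - k < j.+1 * (k + g))%N by apply: ltn_ceil; lia.
have ht : (t * g <= k)%N by apply: leq_trunc_div.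
clearbody m t j.
have hgj : (m <= g * j)%N.
  rewrite leqNgt; apply/negP => H.
  have H1 : ((g * j).+1 * (k + 1) <= m * (k + 1))%N by rewrite leq_mul2r H orbT.
  have H2 : (j * k <= g * j * k)%N by nia.
  nia.
have H3 : (m * t <= g * j * t)%N by nia.
nia.
Qed.
Local Open Scope ring_scope.

Lemma card_natr0 (F : finFieldType) : (#|F|%:R : F) = 0.
Proof.
by rewrite -cardsT -FinRing.zmodXgE; apply/eqP; rewrite -order_dvdn order_dvdG ?inE.
Qed.

Lemma ext_exists (F : finFieldType) k : (0 < k)%N ->
  {L : fieldExtType F | \dim {:L} = k}.
Proof.
move=> k_gt0; set m := (#|F| ^ k)%N.
have q_gt1 := finNzRing_gt1 F.
have m_gt1: (m > 1)%N by rewrite (ltn_exp2l 0).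
have m_gt0 := ltnW m_gt1; have m1_gt0: (m.-1 > 0)%N by rewrite -ltnS prednK.
pose q := 'X^m - 'X; have Dq (R : nzRingType) : q R = ('X^(m.-1) - 1) * ('X - 0).
  by rewrite subr0 mulrBl mul1r -exprSr prednK.
have /FinSplittingFieldFor[/= L splitLq]: q F != 0.
  by rewrite Dq monic_neq0 ?rpredM ?monicXsubC ?monicXnsubC.
rewrite rmorphB rmorphXn /= map_polyX -/(q L) in splitLq.
exists L.
pose Fm := FinFieldExtType L.
have /finField_galois_generator[/= a _ Da]: (1 <= {:L})%VS by apply: sub1v.
pose Em := fixedSpace (a ^+ k)%g; rewrite dimv1 expn1 in Da.
have{splitLq} [zs DqL defL] := splitLq.
have mL0 : (m%:R : L) = 0.
  by rewrite -(scaler_nat m (1 : L)) -in_algE natrX card_natr0 expr0n gtn_eqF // raddf0.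
have Uzs: uniq zs.
  rewrite -separable_prod_XsubC -(eqp_separable DqL) Dq separable_root andbC.
  rewrite /root !hornerE subr_eq0 eq_sym expr0n gtn_eqF ?oner_eq0 //=.
  rewrite cyclotomic.separable_Xn_sub_1 // -subn1 natrB // subr_eq0.
  by rewrite mL0 eq_sym oner_eq0.
have cardL : #|Fm| = m.
  suffices /eq_card->: Fm =i zs.
    apply: succn_inj; rewrite (card_uniqP _) //= -(size_prod_XsubC _ id).
    by rewrite -(eqp_size DqL) size_polyDl size_polyXn // size_polyN size_polyX.
  have in_zs: zs =i Em.
    move=> z; rewrite -root_prod_XsubC -(eqp_root DqL) (sameP fixedSpaceP eqP).
    rewrite /root !hornerE subr_eq0 /= /m; congr (_ == z).
    elim: (k) => [|i IHi]; first by rewrite gal_id.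
    by rewrite expgSr expnSr exprM IHi galM ?Da ?memvf.
  suffices defEm: Em = {:L}%VS by move=> z; rewrite in_zs defEm memvf.
  apply/eqP; rewrite eqEsubv subvf -defL -[Em]subfield_closed agenvS //.
  by rewrite subv_add sub1v; apply/span_subvP=> z; rewrite in_zs.
have := card_vspace (fullv : {vspace finvect_type L}).
rewrite card_vspacef cardL => /eqP; rewrite eqn_exp2l //.
by move/eqP.
Qed.
Lemma lfunE' (K : fieldType) (aT rT : vectType K) (f : aT -> rT) (lf : linear f) u :
  linfun f u = f u.
Proof.
pose fM := GRing.isLinear.Build _ _ _ _ f lf.
pose fL : {linear _ -> _} := HB.pack f fM.
exact: (lfunE fL u).
Qed.

Section Core.
Variables (F : fieldType) (L : fieldExtType F) (g j : nat).
Variable pi : 'Hom(L, 'rV[F]_g).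
Hypothesis pi_surj : forall r, exists u, pi u = r.

Definition W := (L * {ffun 'I_j -> (L * 'rV[F]_g)})%type.

Definition Ef (Y : {ffun 'I_j -> L}) (u : L) : W :=
  (u, [ffun i => (u * Y i, pi (u * Y i ^+ 2))]).

Lemma Ef_lin Y : linear (Ef Y).
Proof.
move=> a u v; rewrite /Ef; congr (_, _); apply/ffunP=> i; rewrite !ffunE /=.
by rewrite mulrDl -scalerAl mulrDl -scalerAl linearP.
Qed.

Definition EY Y : 'Hom(L, W) := linfun (Ef Y).
Definition UY Y : {vspace W} := limg (EY Y).

Lemma EYE Y u : EY Y u = Ef Y u.
Proof. exact: lfunE' (Ef_lin Y) u. Qed.

Lemma memUY Y w : reflect (exists u, w = Ef Y u) (w \in UY Y).
Proof.
apply: (iffP memv_imgP) => [[u _ ->]|[u ->]]; exists u; rewrite ?EYE //.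
by rewrite memvf.
Qed.

Lemma dimUY Y : \dim (UY Y) = \dim {:L}.
Proof.
rewrite /UY limg_dim_eq //; apply/eqP; rewrite -subv0; apply/subvP=> u.
rewrite memv_cap memv_ker EYE memv0 => /andP[_ /eqP /(congr1 fst) /= ->].
by [].
Qed.

Lemma UY_inj : injective UY.
Proof.
move=> Y1 Y2 eqU.
have : Ef Y1 1 \in UY Y2 by rewrite -eqU; apply/memUY; exists 1.
case/memUY=> c; rewrite /Ef => -[<- /ffunP Hi].
apply/ffunP=> i; have := Hi i; rewrite !ffunE !mul1r => -[-> _].
by [].
Qed.


Lemma Ef_sum_eq (Y1 Y2 Y3 : {ffun 'I_j -> L}) a b c : Ef Y1 a + Ef Y2 b = Ef Y3 c ->
  a + b = c /\ forall i, a * Y1 i + b * Y2 i = c * Y3 i /\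
     pi (a * Y1 i ^+ 2) + pi (b * Y2 i ^+ 2) = pi (c * Y3 i ^+ 2).
Proof.
rewrite /Ef => -[-> /ffunP H]; split=> // i; have := H i.
by rewrite !ffunE => -[-> ->].
Qed.

Lemma Ef0 Y : Ef Y 0 = 0.
Proof. by rewrite -(EYE Y) linear0. Qed.

Lemma ex_diff (Y1 Y2 : {ffun 'I_j -> L}) : Y1 != Y2 -> exists i, Y1 i != Y2 i.
Proof.
move=> ne; case: (pickP (fun i => Y1 i != Y2 i)) => [i H|H]; first by exists i.
by case/eqP: ne; apply/ffunP=> i; have := H i => /negbFE/eqP.
Qed.

Lemma cap12 (Y1 Y2 : {ffun 'I_j -> L}) i : Y1 i != Y2 i -> (UY Y1 :&: UY Y2 = 0)%VS.
Proof.
move=> ne; apply/eqP; rewrite -subv0; apply/subvP=> w.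
rewrite memv_cap memv0 => /andP[/memUY[a ->] /memUY[c]].
rewrite /Ef => -[<- /ffunP /(_ i)]; rewrite !ffunE => -[/eqP].
rewrite -subr_eq0 -mulrBr mulf_eq0 subr_eq0 (negPf ne) orbF => /eqP -> _.
by rewrite -/(Ef Y1 0) Ef0.
Qed.


Lemma dim_ker_surj (phi : 'Hom(L, 'rV[F]_g)) : (forall r, exists u, phi u = r) ->
  (\dim (lker phi) + g = \dim {:L})%N.
Proof.
move=> surj; have := limg_ker_dim phi fullv.
have -> : (phi @: fullv)%VS = fullv.
  apply/vspaceP => r; rewrite memvf; apply/memv_imgP.
  by have [u <-] := surj r; exists u; rewrite ?memvf.
rewrite capfv dimvf /=.
have -> // : dim 'rV[F]_g = g.
  by rewrite /dim /= mul1n.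
Qed.


Lemma mulr_lin (e : L) : linear (fun c : L => pi (c * e)).
Proof. by move=> a u v /=; rewrite mulrDl -scalerAl linearP. Qed.

Lemma dim3 (Y1 Y2 Y3 : {ffun 'I_j -> L}) : Y1 != Y2 -> Y2 != Y3 -> Y1 != Y3 ->
  (2 * \dim {:L} + g <= \dim (UY Y1 + UY Y2 + UY Y3))%N.
Proof.
move=> n12 n23 n13.
have gle : (g <= \dim {:L})%N by rewrite -(dim_ker_surj pi_surj) leq_addl.
have [i0 ne12] := ex_diff n12.
have d12 : \dim (UY Y1 + UY Y2) = (\dim {:L} + \dim {:L})%N.
  by have := dimv_sum_cap (UY Y1) (UY Y2); rewrite (cap12 ne12) dimv0 addn0 !dimUY.
have S := dimv_sum_cap (UY Y1 + UY Y2) (UY Y3); rewrite d12 dimUY in S.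
suff Hc : (\dim ((UY Y1 + UY Y2) :&: UY Y3) + g <= \dim {:L})%N by lia.
case: (boolP ((Y3 i0 == Y1 i0) || (Y3 i0 == Y2 i0))) => [Heq | Hne].
  have -> : ((UY Y1 + UY Y2) :&: UY Y3 = 0)%VS; last by rewrite dimv0.
  apply/eqP; rewrite -subv0; apply/subvP => w; rewrite memv_cap memv0.
  case/andP=> /memv_addP[u /memUY[a ->] [v /memUY[b ->] ->]] /memUY[c E].
  have [Hc Hi] := Ef_sum_eq E.
  suff [-> ->] : a = 0 /\ b = 0 by rewrite !Ef0 addr0.
  have canc (x y z : L) : x * (y - z) = 0 -> y != z -> x = 0.
    by move/eqP; rewrite mulf_eq0 subr_eq0 => /orP[/eqP//|->].
  case/orP: Heq => /eqP h.
    have b0 : b = 0.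
      have [l _] := Hi i0; apply: (canc b (Y2 i0) (Y1 i0)); last by rewrite eq_sym.
      have -> : b * (Y2 i0 - Y1 i0) = a * Y1 i0 + b * Y2 i0 - (a + b) * Y1 i0 by ring.
      by rewrite l Hc h subrr.
    split=> //; move: Hc; rewrite b0 addr0 => Hc.
    have [i1 ne13] := ex_diff n13; have [l _] := Hi i1.
    apply: (canc a (Y1 i1) (Y3 i1)) => //.
    by move: l; rewrite b0 mul0r addr0 -Hc mulrBr => ->; rewrite subrr.
  have a0 : a = 0.
    have [l _] := Hi i0; apply: (canc a (Y1 i0) (Y2 i0)) => //.
    have -> : a * (Y1 i0 - Y2 i0) = a * Y1 i0 + b * Y2 i0 - (a + b) * Y2 i0 by ring.
    by rewrite l Hc h subrr.
  split=> //; move: Hc; rewrite a0 add0r => Hc.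
  have [i1 ne23] := ex_diff n23; have [l _] := Hi i1.
  apply: (canc b (Y2 i1) (Y3 i1)) => //.
  by move: l; rewrite a0 mul0r add0r -Hc mulrBr => ->; rewrite subrr.
move: Hne; rewrite negb_or => /andP[ne31 ne32].
set y1 := Y1 i0; set y2 := Y2 i0; set y3 := Y3 i0.
pose e := (y1 - y3) * (y3 - y2).
have e0 : e != 0 by rewrite mulf_neq0 // subr_eq0 // eq_sym.
pose phi : 'Hom(L, 'rV[F]_g) := linfun (fun c => pi (c * e)).
have phiE c : phi c = pi (c * e) by rewrite /phi (lfunE' (mulr_lin e)).
have phis : forall r, exists u, phi u = r.
  move=> r; have [u <-] := pi_surj r; exists (u / e).
  by rewrite phiE mulfVK.
have dK := dim_ker_surj phis.
have sub : ((UY Y1 + UY Y2) :&: UY Y3 <= EY Y3 @: lker phi)%VS.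
  apply/subvP => w; rewrite memv_cap.
  case/andP=> /memv_addP[u /memUY[a ->] [v /memUY[b ->] ->]] /memUY[c E].
  apply/memv_imgP; exists c; last by rewrite EYE E.
  have [Hc Hi] := Ef_sum_eq E; have [l p] := Hi i0.
  rewrite memv_ker phiE.
  have -> : c * e = a * y1 ^+ 2 + b * y2 ^+ 2 - c * y3 ^+ 2.
    apply/eqP; rewrite -subr_eq0 -Hc.
    have -> : (a + b) * e - (a * y1 ^+ 2 + b * y2 ^+ 2 - (a + b) * y3 ^+ 2)
      = - ((y1 + y2) * (a * y1 + b * y2 - (a + b) * y3)) by rewrite /e; ring.
    by rewrite Hc l subrr mulr0 oppr0.
  by rewrite raddfB raddfD p subrr.
have h1 := limg_ker_dim (EY Y3) (lker phi).
have h2 := dimvS sub.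
rewrite -dK leq_add2r (leq_trans h2) // -h1 leq_addl //.
Qed.

End Core.

Lemma dimW (F : fieldType) (L : fieldExtType F) g j :
  \dim {: W L g j} = (\dim {:L} + j * (\dim {:L} + g))%N.
Proof.
rewrite !dimvf; congr (_ + _)%N; rewrite {1}/dim /= card_ord; congr (_ * _)%N; rewrite {1}/dim /=; congr (_ + _)%N; by rewrite /dim /= mul1n.
Qed.

Lemma img_inj (K : fieldType) (aT rT : vectType K) (T : 'Hom(aT, rT)) (A B : {vspace aT}) :
  lker T == 0%VS -> (T @: A = T @: B)%VS -> A = B.
Proof.
move=> /lker0P Ti eqAB.
have H (X Y : {vspace aT}) : (T @: X = T @: Y)%VS -> (X <= Y)%VS.
  move=> eXY; apply/subvP=> x Xx.
  have : T x \in (T @: Y)%VS by rewrite -eXY memv_img.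
  by case/memv_imgP=> y Yy /Ti ->.
by apply/eqP; rewrite eqEsubv !H.
Qed.

Section Emb.
Variables (K : fieldType) (vT : vectType K) (n : nat).
Hypothesis hd : (\dim {:vT} <= n)%N.
Local Notation d := (\dim {:vT}).
Definition Pmx : 'M[K]_(d, n) := \matrix_(i, k) ((i : nat) == k)%:R.
Definition cvec (w : vT) : 'rV[K]_d := \row_i coord (vbasis fullv) i w.
Definition embf (w : vT) : 'rV[K]_n := cvec w *m Pmx.
Lemma embf_lin : linear embf.
Proof.
move=> a u v; rewrite /embf scalemxAl -mulmxDl; congr (_ *m _).
by apply/rowP=> i; rewrite !mxE linearP.
Qed.
Definition emb : 'Hom(vT, 'rV[K]_n) := linfun embf.
Lemma mulP (r : 'rV[K]_d) i : (r *m Pmx) 0 (widen_ord hd i) = r 0 i.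
Proof.
rewrite mxE (bigD1 i) //= mxE eqxx mulr1 big1 ?addr0 // => k nki.
by rewrite mxE (negbTE (nki : (k : nat) != i)) mulr0.
Qed.

Lemma emb_inj : lker emb == 0%VS.
Proof.
apply/lker0P => u v; rewrite /emb !(lfunE' embf_lin) /embf => E.
have Ec : cvec u = cvec v.
  apply/rowP=> i; rewrite -!mulP; exact: (congr1 (fun r : 'rV_n => r 0 (widen_ord hd i)) E).
rewrite (coord_vbasis (memvf u)) (coord_vbasis (memvf v)).
apply: eq_bigr => i _; have := congr1 (fun r : 'rV[K]_d => r 0 i) Ec.
by rewrite /cvec !mxE => ->.
Qed.
End Emb.

Section Code.
Variables (F : finFieldType) (L : fieldExtType F) (g j n : nat).
Variable pi : 'Hom(L, 'rV[F]_g).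
Hypothesis pi_surj : forall r, exists u, pi u = r.
Hypothesis hn : (\dim {: W L g j} <= n)%N.

Definition CY (Y : {ffun 'I_j -> L}) : {vspace 'rV[F]_n} := (emb (W L g j) n @: UY pi Y)%VS.

Definition code : seq {vspace 'rV[F]_n} :=
  [seq CY Y | Y : {ffun 'I_j -> finvect_type L}].

Lemma CY_inj : injective CY.
Proof. by move=> Y1 Y2 /(img_inj (emb_inj hn)) /UY_inj. Qed.

Lemma code_uniq : uniq code.
Proof. by rewrite map_inj_uniq ?enum_uniq //; exact: CY_inj. Qed.

Lemma dimCY Y : \dim (CY Y) = \dim {:L}.
Proof. by rewrite /CY limg_dim_eq ?dimUY // (eqP (emb_inj hn)) capv0. Qed.

Lemma code_size : size code = ((#|F| ^ \dim {:L}) ^ j)%N.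
Proof.
rewrite size_map -cardE card_ffun card_ord; congr (_ ^ _)%N.
have := card_vspace (fullv : {vspace finvect_type L}).
by rewrite card_vspacef.
Qed.

Lemma code_triple (S : seq {vspace 'rV[F]_n}) :
  uniq S -> size S = 3 -> {subset S <= code} ->
  (2 * \dim {:L} + g <= \dim (\sum_(U <- S) U)%VS)%N.
Proof.
case: S => [|s1 [|s2 [|s3 [|s4 S]]]] //= uS _ subS.
have get s : s \in [:: s1; s2; s3] -> exists Y, s = CY Y.
  by move=> /subS /mapP[Y _ ->]; exists Y.
have [Y1 E1] := get s1 (mem_head _ _).
have [Y2 E2] : exists Y, s2 = CY Y by apply: get; rewrite !inE eqxx orbT.
have [Y3 E3] : exists Y, s3 = CY Y by apply: get; rewrite !inE eqxx !orbT.
move: uS; rewrite E1 E2 E3 !inE !negb_or => /and3P[/andP[n12 n13] n23 _].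
have ne (A B : {ffun 'I_j -> L}) : CY A != CY B -> A != B.
  by apply: contraNN => /eqP ->.
rewrite !big_cons big_nil addv0 /CY -!limgD limg_dim_eq; last first.
  by rewrite (eqP (emb_inj hn)) capv0.
rewrite addvA; apply: (dim3 pi_surj); apply: ne => //.
Qed.

End Code.
Section Proj.
Variables (F : fieldType) (L : vectType F) (g : nat).
Hypothesis hg : (g <= \dim {:L})%N.
Definition projf (u : L) : 'rV[F]_g := \row_(l < g) coord (vbasis fullv) (widen_ord hg l) u.
Lemma projf_lin : linear projf.
Proof. by move=> a u v; apply/rowP=> i; rewrite !mxE linearP. Qed.
Definition proj : 'Hom(L, 'rV[F]_g) := linfun projf.
Lemma proj_surj r : exists u, proj u = r.
Proof.
exists (\sum_(i < \dim {:L}) (\sum_(l < g | widen_ord hg l == i) r 0 l) *: (vbasis fullv)`_i).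
rewrite /proj (lfunE' projf_lin); apply/rowP => l0; rewrite mxE coord_sum_free; last first.
  exact: basis_free (vbasisP _).
by rewrite (big_pred1 l0) // => l /=.
Qed.
End Proj.

Theorem mainTheorem13 (F : finFieldType) (q n k gamma : nat) :
  #|F| = q -> (0 < n)%N -> (0 < k)%N -> (0 < gamma)%N ->
  (2 * k + gamma <= n)%N ->
  exists C : seq {vspace 'rV[F]_n},
    @covering_code F n k (k + gamma) 3 C /\
    (q ^ (((n - 2 * k + 1) %/ (k + 1)) * (k %/ gamma)) <= size C)%N.
Proof.
move=> hq n0 k0 g0 hn.
have [L dL] := ext_exists F k0.
have q0 : (0 < q)%N by rewrite -hq; apply: ltnW; apply: finNzRing_gt1.
case: (leqP gamma k) => hgk.
  have hg : (gamma <= \dim {:L})%N by rewrite dL.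
  pose j := ((n - k) %/ (k + gamma))%N.
  have hW : (\dim {: W L gamma j} <= n)%N.
    rewrite dimW dL; have := leq_trunc_div (n - k) (k + gamma); rewrite -/j; lia.
  exists (@code F L gamma j n (proj hg)); split.
    split; first exact: (code_uniq _ hW).
      by move=> U /mapP[Y _ ->]; rewrite (dimCY _ hW) dL.
    move=> S uS sS subS; have := code_triple (proj_surj hg) hW uS sS subS.
    rewrite dL => h; rewrite addnA addnn -mul2n; exact: h.
  rewrite code_size dL hq -expnM leq_pexp2l //.
  by rewrite /j; apply: arith_bound.
rewrite (divn_small hgk) muln0 expn0.
pose pi0 : 'Hom(L, 'rV[F]_0) := 0.
have pi0s : forall r, exists u, pi0 u = r.
  by move=> r; exists 0; apply/rowP => -[].
have hW : (\dim {: W L 0 0} <= n)%N by rewrite dimW dL; lia.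
exists (@code F L 0 0 n pi0); split; last by rewrite code_size expn0.
split; first exact: (code_uniq _ hW).
  by move=> U /mapP[Y _ ->]; rewrite (dimCY _ hW) dL.
move=> S uS sS subS; have := uniq_leq_size uS subS.
by rewrite code_size sS expn0.
Qed.
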